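(* Let $q\ge2$ and let $n,k$ be integers with $0<k\le n$. Then $$2^{nE_{k,q}}\le a_q(n,k)\le 2^{nE_{k,q}}+2q^{\,n-\lceil k/2\rceil}.$$
   Context: $\Sigma_q=\{0,\dots,q-1\}$. A vector in $\Sigma_q^n$ is a $k$-RLL vector if $n<k$ or it has no run of $k$ consecutive zeros; $a_q(n,k)$ is the number of $k$-RLL vectors in $\Sigma_q^n$. For fixed $k,q$, the capacity is $E_{k,q}=\lim_{n\to\infty}\frac{\log_2 a_q(n,k)}{n}$ (this limit exists). *)

(* Defs.v *)
From Stdlib Require Import Reals.
From mathcomp Require Import all_boot.

Set Implicit Arguments.
Unset Strict Implicit.
Unset Printing Implicit Defensive.

Definition has_zero_run (q n k : nat) (w : n.-tuple 'I_q) : bool :=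
  [exists i : 'I_n.+1,
     (i + k <= n) && [forall j : 'I_k, nth 0 (map val w) (i + j) == 0]].

Definition RLL (q n k : nat) (w : n.-tuple 'I_q) : bool :=
  (n < k) || ~~ has_zero_run k w.

Definition a_q (q n k : nat) : nat := #|[pred w : n.-tuple 'I_q | RLL k w]|.

Definition log2 (x : R) : R := Rdiv (ln x) (ln 2).

(* Main.v *)
Require Import Defs.
From Stdlib Require Import Reals Lra.
From mathcomp Require Import all_boot zify.

Definition ZR (k : nat) (s : seq nat) : Prop :=
  exists i, (i + k <= size s)%N /\ forall j, (j < k)%N -> nth 0%N s (i + j) = 0%N.
Definition PRE (h : nat) (s : seq nat) : Prop :=
  forall j, (j < h)%N -> nth 0%N s j = 0%N.
Definition SUF (h : nat) (s : seq nat) : Prop :=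
  forall j, (j < h)%N -> nth 0%N s (size s - h + j) = 0%N.

Lemma nth_cat_l (u v : seq nat) m : (m < size u)%N -> nth 0%N (u ++ v) m = nth 0%N u m.
Proof. by move=> H; rewrite nth_cat H. Qed.
Lemma nth_cat_r (u v : seq nat) m : (size u <= m)%N -> nth 0%N (u ++ v) m = nth 0%N v (m - size u).
Proof. by move=> H; rewrite nth_cat ltnNge H. Qed.

Lemma zr_catl k u v : ZR k u -> ZR k (u ++ v).
Proof.
move=> [i [hi hf]]; exists i; split; first by rewrite size_cat; lia.
by move=> j hj; rewrite nth_cat_l ?hf //; lia.
Qed.

Lemma zr_catr k u v : ZR k v -> ZR k (u ++ v).
Proof.
move=> [i [hi hf]]; exists (size u + i); split; first by rewrite size_cat; lia.
move=> j hj; rewrite nth_cat_r; last lia.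
have -> : (size u + i + j - size u = i + j)%N by lia.
exact: hf.
Qed.

Lemma pre_cat h u v : (h <= size u)%N -> PRE h (u ++ v) -> PRE h u.
Proof. move=> hu hp j hj; have := hp j hj; rewrite nth_cat_l //; lia. Qed.

Lemma suf_cat h u v : (h <= size v)%N -> SUF h (u ++ v) -> SUF h v.
Proof.
move=> hv hp j hj; have := hp j hj; rewrite size_cat nth_cat_r; last lia.
by have -> : (size u + size v - h + j - size u = size v - h + j)%N by lia.
Qed.

Lemma cross k h u v : (h <= size u)%N -> (h <= size v)%N -> (h.*2 <= k.+1)%N ->
  ~ ZR k u -> ~ ZR k v -> ~ SUF h u -> ~ PRE h v -> ~ ZR k (u ++ v).
Proof.
move=> hu hv hk nu nv su pv [i [hi hf]]; rewrite size_cat in hi.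
case: (leqP (i + k) (size u)) => c1.
  apply: nu; exists i; split => // j hj; have := hf j hj; rewrite nth_cat_l //; lia.
case: (leqP (size u) i) => c2.
  apply: nv; exists (i - size u); split; first lia.
  move=> j hj; have := hf j hj; rewrite nth_cat_r; last lia.
  by have -> : (i + j - size u = i - size u + j)%N by lia.
case: (leqP h (size u - i)) => c3.
  apply: su => j hj; have := hf (size u - h + j - i) ltac:(lia).
  rewrite nth_cat_l; last lia.
  by have -> : (i + (size u - h + j - i) = size u - h + j)%N by lia.
apply: pv => j hj; have := hf (size u - i + j) ltac:(lia).
rewrite nth_cat_r; last lia.
by have -> : (i + (size u - i + j) - size u = j)%N by lia.
Qed.

Set Implicit Arguments.
Section T.
Variables (q k h : nat).
Hypothesis (hq : (1 < q)%N) (hk : (0 < k)%N).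

Lemma hzrP n (w : n.-tuple 'I_q) : has_zero_run k w <-> ZR k (map val w).
Proof.
split.
  move/existsP=> [i /andP[hi /forallP hf]]; exists i; rewrite size_map size_tuple.
  by split=> // j hj; apply/eqP: (hf (Ordinal hj)).
move=> [i [hi hf]]; rewrite size_map size_tuple in hi.
have hi' : (i < n.+1)%N by lia.
apply/existsP; exists (Ordinal hi'); apply/andP; split => //=.
by apply/forallP => j; apply/eqP; apply: hf.
Qed.

Lemma RLLP n (w : n.-tuple 'I_q) : RLL k w <-> ~ ZR k (map val w).
Proof.
rewrite /RLL; split.
  case/orP => [hn [i [hi _]]|]; first by rewrite size_map size_tuple in hi; lia.
  by move=> /negP H /hzrP.
move=> H; apply/orP; right; apply/negP => /hzrP; exact: H.
Qed.

Definition preb n (w : n.-tuple 'I_q) := [forall j : 'I_h, nth 0%N (map val w) j == 0%N].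
Definition sufb n (w : n.-tuple 'I_q) := [forall j : 'I_h, nth 0%N (map val w) (n - h + j) == 0%N].

Lemma preP n (w : n.-tuple 'I_q) : preb w <-> PRE h (map val w).
Proof.
split; first by move/forallP=> H j hj; apply/eqP: (H (Ordinal hj)).
by move=> H; apply/forallP => j; apply/eqP; apply: H.
Qed.

Lemma sufP n (w : n.-tuple 'I_q) : sufb w <-> SUF h (map val w).
Proof.
rewrite /SUF size_map size_tuple.
split; first by move/forallP=> H j hj; apply/eqP: (H (Ordinal hj)).
by move=> H; apply/forallP => j; apply/eqP; apply: H.
Qed.

Definition Aset n := [set w : n.-tuple 'I_q | RLL k w].
Definition Bset n := [set w : n.-tuple 'I_q | [&& RLL k w, ~~ preb w & ~~ sufb w]].
Definition bb n := #|Bset n|.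

Lemma a_eq n : a_q q n k = #|Aset n|.
Proof. by apply: eq_card => w; rewrite !inE. Qed.

Lemma a_ge_b n : (bb n <= a_q q n k)%N.
Proof.
rewrite a_eq; apply: subset_leq_card; apply/subsetP => w; rewrite !inE.
by case/and3P.
Qed.

Lemma a_pos n : (0 < a_q q n k)%N.
Proof.
rewrite a_eq; apply/card_gt0P; exists (nseq_tuple n (Ordinal hq)); rewrite inE.
apply/RLLP => -[i [hi hf]]; have := hf 0%N hk.
rewrite size_map size_tuple in hi.
rewrite /= map_nseq nth_nseq; case: ifP => //; lia.
Qed.

Lemma split_tuple n L (w : (n + L).-tuple 'I_q) : exists u v, w = cat_tuple u v.
Proof.
have s1 : size (take n w) == n by rewrite size_takel // size_tuple leq_addr.
have s2 : size (drop n w) == L by rewrite size_drop size_tuple addKn.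
exists (Tuple s1), (Tuple s2); apply: val_inj => /=.
by rewrite cat_take_drop.
Qed.

Lemma a_sub n L : (a_q q (n + L) k <= a_q q n k * a_q q L k)%N.
Proof.
rewrite !a_eq -cardsX.
apply: (leq_trans _ (leq_imset_card (fun p => cat_tuple p.1 p.2) _)).
apply: subset_leq_card; apply/subsetP => w; rewrite inE => Hw.
move: Hw; have [u [v ->]] := @split_tuple n L w; move=> Hw.
apply/imsetP; exists (u, v) => //; rewrite !inE.
move/RLLP: Hw => Hw; apply/andP; split; apply/RLLP => H; apply: Hw; rewrite /= ?map_cat.
  exact: zr_catl.
exact: zr_catr.
Qed.

Lemma b_super n L : (k <= n)%N -> (k <= L)%N -> (h <= k)%N -> (h.*2 <= k.+1)%N ->
  (bb n * bb L <= bb (n + L))%N.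
Proof.
move=> hn hL hh h2.
rewrite /bb -cardsX -(card_in_imset (f := fun p => cat_tuple p.1 p.2)).
  apply: subset_leq_card; apply/subsetP => w /imsetP [[u v]].
  rewrite !inE /= => /andP [hu hv] ->.
  case/and3P: hu => /RLLP ru /negP pu /negP su.
  case/and3P: hv => /RLLP rv /negP pv /negP sv.
  have hu : (h <= size (map val u))%N by rewrite size_map size_tuple; lia.
  have hv : (h <= size (map val v))%N by rewrite size_map size_tuple; lia.
  apply/and3P; split.
  - apply/RLLP; rewrite /= map_cat; apply: (@cross k h) => //.
      by move/sufP.
    by move/preP.
  - apply/negP => H; apply: pu; apply: (iffRL (preP u)); apply: (@pre_cat h _ (map val v) hu).
    by have := iffLR (preP (cat_tuple u v)) H; rewrite /= map_cat.
  - apply/negP => H; apply: sv; apply: (iffRL (sufP v)); apply: (@suf_cat h (map val u) _ hv).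
    by have := iffLR (sufP (cat_tuple u v)) H; rewrite /= map_cat.
move=> [u1 v1] [u2 v2] _ _ /= /(congr1 val) /= /eqP.
rewrite eqseq_cat ?size_tuple // => /andP [/eqP e1 /eqP e2].
by congr pair; apply: val_inj.
Qed.


Definition Pset n := [set w : n.-tuple 'I_q | preb w].
Definition Sset n := [set w : n.-tuple 'I_q | sufb w].

Lemma hq0 : (0 < q)%N. Proof. lia. Qed.
Definition z0 : 'I_q := Ordinal hq0.

Lemma pre_nseq (s : seq nat) : PRE h s -> (h <= size s)%N -> nseq h 0%N ++ drop h s = s.
Proof.
move=> hp hs; rewrite -{2}(cat_take_drop h s); congr (_ ++ _).
apply: (@eq_from_nth _ 0%N); first by rewrite size_nseq size_takel.
move=> i; rewrite size_nseq => hi; rewrite nth_nseq hi nth_take //; by rewrite hp.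
Qed.

Lemma suf_nseq (s : seq nat) : SUF h s -> (h <= size s)%N -> take (size s - h) s ++ nseq h 0%N = s.
Proof.
move=> hp hs; rewrite -{3}(cat_take_drop (size s - h) s); congr (_ ++ _).
apply: (@eq_from_nth _ 0%N); first by rewrite size_nseq size_drop; lia.
move=> i; rewrite size_nseq => hi; rewrite nth_nseq hi nth_drop; by rewrite hp.
Qed.

Lemma card_P n (hn : (h <= n)%N) : (#|Pset n| <= q ^ (n - h))%N.
Proof.
pose f (t : (n - h).-tuple 'I_q) := tcast (subnKC hn) (cat_tuple (nseq_tuple h z0) t).
apply: (@leq_trans #|f @: [set: (n - h).-tuple 'I_q]|).
  apply: subset_leq_card; apply/subsetP => w; rewrite inE => /preP Hw.
  have s2 : size (drop h w) == (n - h) by rewrite size_drop size_tuple.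
  apply/imsetP; exists (Tuple s2); first by rewrite inE.
  apply: val_inj; apply: (inj_map val_inj); rewrite /f /= val_tcast /= map_cat map_nseq map_drop.
  by rewrite pre_nseq // size_map size_tuple.
by apply: (leq_trans (leq_imset_card _ _)); rewrite cardsT card_tuple card_ord.
Qed.

Lemma card_S n (hn : (h <= n)%N) : (#|Sset n| <= q ^ (n - h))%N.
Proof.
pose f (t : (n - h).-tuple 'I_q) := tcast (subnK hn) (cat_tuple t (nseq_tuple h z0)).
apply: (@leq_trans #|f @: [set: (n - h).-tuple 'I_q]|).
  apply: subset_leq_card; apply/subsetP => w; rewrite inE => /sufP Hw.
  have s2 : size (take (n - h) w) == (n - h) by rewrite size_takel // size_tuple leq_subr.
  apply/imsetP; exists (Tuple s2); first by rewrite inE.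
  apply: val_inj; apply: (inj_map val_inj); rewrite /f /= val_tcast /= map_cat map_nseq map_take.
  have := suf_nseq Hw; rewrite size_map size_tuple => -> //.
by apply: (leq_trans (leq_imset_card _ _)); rewrite cardsT card_tuple card_ord.
Qed.

Lemma a_le n (hn : (h <= n)%N) : (a_q q n k <= bb n + 2 * q ^ (n - h))%N.
Proof.
have sub : Aset n \subset Bset n :|: (Pset n :|: Sset n).
  apply/subsetP => w; rewrite !inE => ->.
  by case: (preb w); case: (sufb w).
rewrite a_eq; apply: (leq_trans (subset_leq_card sub)).
apply: (leq_trans (leq_card_setU _ _)); rewrite /bb leq_add2l.
apply: (leq_trans (leq_card_setU _ _)).
by rewrite mul2n -addnn leq_add ?card_P ?card_S.
Qed.

End T.
Unset Implicit Arguments.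
Open Scope R_scope.

Lemma a_pow q k (hq : (1 < q)%N) (hk : (0 < k)%N) m n :
  (a_q q (m.+1 * n) k <= a_q q n k ^ m.+1)%N.
Proof.
elim: m => [|m IH]; first by rewrite mul1n expn1.
rewrite mulSn expnS; apply: leq_trans (@a_sub q k hq hk _ _) _.
by rewrite leq_mul2l IH orbT.
Qed.

Lemma b_pow q k h (hq : (1 < q)%N) (hk : (0 < k)%N) m n :
  (k <= n)%N -> (h <= k)%N -> (h.*2 <= k.+1)%N ->
  (bb q k h n ^ m.+1 <= bb q k h (m.+1 * n))%N.
Proof.
move=> hn hh h2; elim: m => [|m IH]; first by rewrite mul1n expn1.
rewrite mulSn expnS; apply: leq_trans _ (@b_super q k h hq hk _ _ hn _ hh h2).
  by rewrite leq_mul2l IH orbT.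
by rewrite mulSn (leq_trans hn) // leq_addr.
Qed.

Lemma INR_expn a m : INR (a ^ m) = INR a ^ m.
Proof. elim: m => [|m IH] //=; by rewrite expnS mulnE mult_INR IH. Qed.

Lemma INR_mul a b : INR (a * b) = INR a * INR b.
Proof. by rewrite mulnE mult_INR. Qed.

Lemma INR_leq m n : (m <= n)%N -> INR m <= INR n.
Proof. by move=> H; apply: le_INR; apply/leP. Qed.

Lemma ln_mono x y : 0 < x -> x <= y -> ln x <= ln y.
Proof.
move=> hx hxy; case: (Rle_lt_or_eq_dec x y hxy) => [H|->]; last by right.
by left; apply: ln_increasing.
Qed.

Lemma exp_mono x y : x <= y -> exp x <= exp y.
Proof.
move=> hxy; case: (Rle_lt_or_eq_dec x y hxy) => [H|->]; last by right.
by left; apply: exp_increasing.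
Qed.

Lemma ln2_pos : 0 < ln 2.
Proof. rewrite -ln_1; apply: ln_increasing; lra. Qed.

Lemma idx_ge N n : (0 < n)%N -> (N >= N)%coq_nat /\ (N.+1 * n >= N)%coq_nat.
Proof. move=> hn; split; apply/leP => //; exact: (leq_trans (leqnSn N) (leq_pmulr _ hn)). Qed.

Lemma lim_le (u : nat -> R) E c n : Un_cv u E -> (0 < n)%N ->
  (forall m, u (m.+1 * n)%N <= c) -> E <= c.
Proof.
move=> hE hn hu; case: (Rle_or_lt E c) => [//|H]; exfalso.
have [N HN] := hE (E - c) ltac:(lra).
have := HN (N.+1 * n)%N (proj2 (@idx_ge N n hn)); rewrite /R_dist => /Rabs_def2 [H1 H2].
have := hu N; lra.
Qed.

Lemma lim_ge (u : nat -> R) E c n : Un_cv u E -> (0 < n)%N ->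
  (forall m, c <= u (m.+1 * n)%N) -> c <= E.
Proof.
move=> hE hn hu; case: (Rle_or_lt c E) => [//|H]; exfalso.
have [N HN] := hE (c - E) ltac:(lra).
have := HN (N.+1 * n)%N (proj2 (@idx_ge N n hn)); rewrite /R_dist => /Rabs_def2 [H1 H2].
have := hu N; lra.
Qed.

Lemma div_le X Y p n : 0 < p -> 0 < n -> X <= p * Y -> X / ln 2 / (p * n) <= Y / ln 2 / n.
Proof.
move=> hp hn H; have l2 := ln2_pos.
replace (Y / ln 2 / n) with ((p * Y) / ln 2 / (p * n)) by (field; lra).
unfold Rdiv; apply: Rmult_le_compat_r.
  by left; apply: Rinv_0_lt_compat; apply: Rmult_lt_0_compat.
apply: Rmult_le_compat_r => //; by left; apply: Rinv_0_lt_compat.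
Qed.

Lemma div_ge X Y p n : 0 < p -> 0 < n -> p * Y <= X -> Y / ln 2 / n <= X / ln 2 / (p * n).
Proof.
move=> hp hn H; have l2 := ln2_pos.
replace (Y / ln 2 / n) with ((p * Y) / ln 2 / (p * n)) by (field; lra).
unfold Rdiv; apply: Rmult_le_compat_r.
  by left; apply: Rinv_0_lt_compat; apply: Rmult_lt_0_compat.
apply: Rmult_le_compat_r => //; by left; apply: Rinv_0_lt_compat.
Qed.

Lemma from_log A n E : 0 < A -> 0 < n -> E <= log2 A / n -> Rpower 2 (n * E) <= A.
Proof.
move=> hA hn H; have l2 := ln2_pos; rewrite /Rpower -(exp_ln A hA); apply: exp_mono.
have := Rmult_le_compat_l n _ _ (Rlt_le _ _ hn) H; rewrite /log2 => H1.
replace (ln A) with (n * (ln A / ln 2 / n) * ln 2) by (field; lra).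
apply: Rmult_le_compat_r; lra.
Qed.

Lemma to_log A n E : 0 < A -> 0 < n -> log2 A / n <= E -> A <= Rpower 2 (n * E).
Proof.
move=> hA hn H; have l2 := ln2_pos; rewrite /Rpower -(exp_ln A hA); apply: exp_mono.
have := Rmult_le_compat_l n _ _ (Rlt_le _ _ hn) H; rewrite /log2 => H1.
replace (ln A) with (n * (ln A / ln 2 / n) * ln 2) by (field; lra).
apply: Rmult_le_compat_r; lra.
Qed.

Theorem lemma2 (q k : nat) (E : R)
    (hE : Un_cv (fun m : nat => Rdiv (log2 (INR (a_q q m k))) (INR m)) E)
    (n : nat) (hq : (2 <= q)%N) (hk : (0 < k)%N) (hkn : (k <= n)%N) :
  Rpower 2 (INR n * E) <= INR (a_q q n k) /\
  INR (a_q q n k) <= Rpower 2 (INR n * E) + 2 * INR (expn q (n - (k + 1) %/ 2)).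
Proof.
set h := ((k + 1) %/ 2)%N.
have hh : (h <= k)%N by rewrite /h; lia.
have h2 : (h.*2 <= k.+1)%N by rewrite /h -addnn; lia.
have hn : (0 < n)%N by lia.
have hnR : 0 < INR n by apply: lt_0_INR; apply/ltP.
have apos m : 0 < INR (a_q q m k) by apply: lt_0_INR; apply/ltP; apply: a_pos.
have pmR m : 0 < INR m.+1 by apply: lt_0_INR; apply/ltP.
split.
  apply: from_log => //.
  apply: (@lim_le _ E _ n hE hn) => m /=; rewrite INR_mul; apply: div_le => //.
  rewrite -ln_pow // -INR_expn; apply: ln_mono => //; apply: INR_leq.
  exact: a_pow.
have hb : INR (bb q k h n) <= Rpower 2 (INR n * E).
  case: (posnP (bb q k h n)) => [->|bpos].
    by left; rewrite /Rpower; apply: exp_pos.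
  have bR : 0 < INR (bb q k h n) by apply: lt_0_INR; apply/ltP.
  apply: to_log => //.
  apply: (@lim_ge _ E _ n hE hn) => m /=; rewrite INR_mul; apply: div_ge => //.
  rewrite -ln_pow // -INR_expn; apply: ln_mono.
    by rewrite INR_expn; apply: pow_lt.
  apply: INR_leq; apply: leq_trans (@b_pow q k h hq hk m n hkn hh h2) _.
  exact: a_ge_b.
have := @INR_leq _ _ (@a_le q k h hq hk n (leq_trans hh hkn)).
rewrite plus_INR INR_mul.
have -> : INR 2 = 2 by simpl; lra.
lra.
Qed.
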